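(* For every digraph $X$, the Redei–Berge polynomial $u_X(m)$ is a polynomial in $m$ with integer coefficients.
   Context: A digraph $X=(V,E)$: $V$ finite, $E\subset\{(u,v)\in V\times V\mid u\ne v\}$. $\Sigma_V$ is the set of bijections $\sigma:[n]\to V$ ($n=|V|$), $X\mathrm{Des}(\sigma)=\{i\in[n-1]\mid(\sigma_i,\sigma_{i+1})\in E\}$; $F_I=\sum x_{i_1}\cdots x_{i_n}$ over $1\le i_1\le\cdots\le i_n$ with $i_j<i_{j+1}$ for $j\in I$; $U_X=\sum_{\sigma\in\Sigma_V}F_{X\mathrm{Des}(\sigma)}$; $u_X(m)$ is the principal specialization $U_X(1,\dots,1,0,\dots)$ ($m$ ones), a polynomial in $m$ (a priori with rational coefficients). *)

(* Defs.v *)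
From mathcomp Require Import all_boot all_order all_algebra.
Set Implicit Arguments. Unset Strict Implicit. Unset Printing Implicit Defensive.

(* Positions [n] = {1..n} are encoded 0-based as 'I_n, and the variable indices
   {1..m} of the principal specialization as 'I_m. *)

(* i is an X-descent of sigma: (sigma_i, sigma_{i+1}) is an arc. *)
Definition XDes (V : finType) (E : rel V) (n : nat) (s : 'I_n -> V) (i j : 'I_n) :=
  E (s i) (s j).

(* g encodes a monomial x_{g 0} ... x_{g (n-1)} of F_I with I = XDes(s):
   weakly increasing indices, strictly increasing at descents. *)
Definition F_term (V : finType) (E : rel V) (n m : nat)
    (s : 'I_n -> V) (g : {ffun 'I_n -> 'I_m}) : bool :=
  [forall i : 'I_n, forall j : 'I_n,
     (val j == (val i).+1) ==>
       (if XDes E s i j then g i < g j else g i <= g j)]%N.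

(* u_X(m) = U_X(1,...,1,0,...) (m ones) = sum over bijections sigma : [n] -> V
   of the number of monomials of F_{XDes(sigma)} in the variables x_1..x_m. *)
Definition u_X (V : finType) (E : rel V) (m : nat) : nat :=
  \sum_(s : {ffun 'I_#|V| -> V} | injectiveb s)
     #|[set g : {ffun 'I_#|V| -> 'I_m} | F_term E s g]|.

(* Main.v *)
Require Import Defs.
From mathcomp Require Import all_boot all_order all_algebra.
From mathcomp Require Import zify.
From mathcomp Require Import fingroup perm.
Import GRing.Theory.
Set Implicit Arguments. Unset Strict Implicit. Unset Printing Implicit Defensive.

Section UWorld.
Variable V : finType.
Variable E : rel V.
Variable x0 : V.
Local Notation N := #|V|.

Definition getT (T : Type) (d : T) (s : {ffun 'I_N -> T}) (n : nat) : T :=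
  if insub n is Some i then s i else d.
Definition mkT (T : Type) (f : nat -> T) : {ffun 'I_N -> T} := [ffun i => f (val i)].

Lemma getT_val T d s (i : 'I_N) : @getT T d s i = s i.
Proof. by rewrite /getT valK. Qed.
Lemma getT_ge T d s n : N <= n -> @getT T d s n = d.
Proof. by move=> H; rewrite /getT insubF // ltnNge H. Qed.
Lemma getT_lt T d s n (H : n < N) : @getT T d s n = s (Ordinal H).
Proof. by rewrite -(getT_val d s (Ordinal H)). Qed.
Lemma getT_mk T d f n : @getT T d (mkT f) n = if n < N then f n else d.
Proof.
case: ltnP => H; last by rewrite getT_ge.
by rewrite /getT insubT ffunE.
Qed.
Lemma ffun_getT T d s1 s2 : (forall n, n < N -> @getT T d s1 n = getT d s2 n) -> s1 = s2.
Proof. move=> H; apply/ffunP => i; by rewrite -!(getT_val d) H. Qed.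

Local Notation get := (getT x0).
Local Notation getc := (getT None).

Definition colv m (o : option 'I_m) : nat := if o is Some c then val c else 0.
Definition step m x y (a b : option 'I_m) :=
  if E x y then colv a < colv b else colv a <= colv b.

Definition config m := ({ffun 'I_N -> V} * {ffun 'I_N -> option 'I_m})%type.

Definition valid (W : {set V}) m (c : config m) : bool :=
  [&& [forall i : 'I_N, (#|W| <= i) ==> ((c.1 i == x0) && (c.2 i == None))],
      [forall i : 'I_N, (i < #|W|) ==> (c.2 i != None)],
      [forall i : 'I_N, forall j : 'I_N,
          [&& i < #|W|, j < #|W| & c.1 i == c.1 j] ==> (i == j)],
      [forall x, (x \in W) == [exists i : 'I_N, (i < #|W|) && (c.1 i == x)]] &
      [forall i : 'I_N, forall j : 'I_N,
          ((val j == (val i).+1) && (j < #|W|)) ==> step (c.1 i) (c.1 j) (c.2 i) (c.2 j)]].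

Lemma kN (W : {set V}) : #|W| <= N.
Proof. exact: max_card. Qed.

Lemma validP (W : {set V}) m (s : {ffun 'I_N -> V}) (g : {ffun 'I_N -> option 'I_m}) : valid W (s, g) <->
 [/\ (forall n, #|W| <= n -> get s n = x0 /\ getc g n = None),
     (forall n, n < #|W| -> getc g n != None),
     (forall a b, a < #|W| -> b < #|W| -> get s a = get s b -> a = b),
     (forall x, x \in W <-> exists2 n, n < #|W| & get s n = x) &
     (forall n, n.+1 < #|W| -> step (get s n) (get s n.+1) (getc g n) (getc g n.+1))].
Proof.
have kN := kN W.
split.
  case/and5P => /forallP HJ /forallP HC /forallP HI /forallP HIm /forallP HS.
  split.
  - move=> n Hn; case: (ltnP n N) => HnN; last by rewrite !getT_ge.
    have := HJ (Ordinal HnN); rewrite /= Hn /= => /andP [/eqP a /eqP b].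
    by rewrite /getT insubT a b.
  - move=> n Hn; have HnN : n < N by lia.
    have := HC (Ordinal HnN); rewrite /= Hn /=.
    by rewrite /getT insubT.
  - move=> a b Ha Hb; have HaN : a < N by lia. have HbN : b < N by lia.
    have := HI (Ordinal HaN) => /forallP /(_ (Ordinal HbN)) /=.
    rewrite /getT !insubT Ha Hb /= => H /eqP E1.
    by move: H => /implyP /(_ E1) /eqP -[].
  - move=> x; have /eqP -> := HIm x; split.
      case/existsP => i /andP [Hi /eqP <-]; exists i => //; by rewrite getT_val.
    case=> n Hn <-; have HnN : n < N by lia.
    by apply/existsP; exists (Ordinal HnN); rewrite /= Hn (getT_lt _ _ HnN) eqxx.
  - move=> n Hn; have HnN : n.+1 < N by lia. have HnN' : n < N by lia.
    have := HS (Ordinal HnN') => /forallP /(_ (Ordinal HnN)) /=.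
    by rewrite /getT !insubT Hn eqxx /=; apply.
case=> HJ HC HI HIm HS; apply/and5P; split.
- apply/forallP => i; apply/implyP => Hi.
  by case: (HJ i Hi); rewrite !getT_val => -> ->; rewrite !eqxx.
- apply/forallP => i; apply/implyP => Hi.
  by have := HC i Hi; rewrite getT_val.
- apply/forallP => i; apply/forallP => j; apply/implyP => /and3P [Hi Hj /eqP Hij].
  apply/eqP; apply: val_inj; apply: HI => //; by rewrite !getT_val.
- apply/forallP => x; apply/eqP; apply/idP/existsP.
    case/HIm => n Hn <-; have HnN : n < N by lia.
    by exists (Ordinal HnN); rewrite /= Hn (getT_lt _ _ HnN) eqxx.
  case=> i /andP [Hi /eqP <-]; apply/HIm; exists i => //; by rewrite getT_val.
- apply/forallP => i; apply/forallP => j; apply/implyP => /andP [/eqP Hij Hj].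
  have := HS i; rewrite -Hij => /(_ Hj).
  have HjN : (val i).+1 < N by rewrite -Hij ltn_ord.
  by rewrite !getT_val.
Qed.

Definition U (W : {set V}) m := #|[set c : config m | valid W c]|.

Lemma Uempty m : U set0 m = 1.
Proof.
rewrite /U (_ : [set c : config m | valid set0 c] = [set (mkT (fun _ => x0), mkT (fun _ => None))]) ?cards1 //.
apply/setP => -[s g]; rewrite !inE.
apply/idP/idP.
  move/validP; rewrite cards0 => -[HJ _ _ _ _].
  apply/eqP; congr pair; [apply: (@ffun_getT V x0) | apply: (@ffun_getT (option 'I_m) None)] => n Hn; rewrite getT_mk Hn;
  by case: (HJ n (leq0n n)).
move/eqP => -[-> ->]; apply/validP; rewrite cards0; split => //.
- by move=> n _; rewrite !getT_mk; case: ifP.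
- by move=> x; rewrite in_set0; split => // -[].
Qed.

Lemma U0 (W : {set V}) : W != set0 -> U W 0 = 0.
Proof.
case/set0Pn => x xW; apply/eqP; rewrite cards_eq0; apply/eqP/setP => -[s g].
rewrite !inE; apply/negbTE/negP => /validP [_ HC _ HIm _].
case: (HIm x) => /(_ xW) [n Hn _].
by move: (HC n Hn); case: (getc g n) => // -[].
Qed.

Lemma monotone (W : {set V}) m (s : {ffun 'I_N -> V}) (g : {ffun 'I_N -> option 'I_m}) :
  valid W (s, g) -> forall a b, a <= b -> b < #|W| -> colv (getc g a) <= colv (getc g b).
Proof.
move=> /validP [_ _ _ _ HS] a b Hab; move: {2}(b - a) (erefl (b - a)) => d.
elim: d b Hab => [|d IH] b Hab Hd Hb.
  by have -> : b = a by lia.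
case: b Hab Hd Hb => [|b] Hab Hd Hb; first lia.
have Hs := HS b Hb; rewrite /step in Hs.
apply: (leq_trans (IH b _ _ _)); try lia.
by case: (E _ _) Hs => // /ltnW.
Qed.

Lemma card_ltset n : n <= N -> #|[set i : 'I_N | i < n]| = n.
Proof.
move=> HnN.
have -> : [set i : 'I_N | i < n] = [set widen_ord HnN j | j : 'I_n].
  apply/setP => i; rewrite !inE; apply/idP/imsetP.
    by move=> Hi; exists (Ordinal Hi) => //; apply: val_inj.
  by case=> j _ ->; rewrite /= ltn_ord.
rewrite card_imset ?card_ord //.
by move=> a b /(congr1 val) /= /val_inj.
Qed.

Lemma downset (A : {set 'I_N}) :
  (forall i j : 'I_N, i <= j -> j \in A -> i \in A) -> forall i : 'I_N, (i \in A) = (i < #|A|).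
Proof.
move=> Hd i; apply/idP/idP => [iA|].
  have : [set j : 'I_N | j < i.+1] \subset A.
    by apply/subsetP => j; rewrite inE ltnS => /Hd; apply.
  by move/subset_leq_card; rewrite card_ltset ?ltn_ord.
apply: contraLR => iA; rewrite -leqNgt.
have : A \subset [set j : 'I_N | j < i].
  apply/subsetP => j jA; rewrite inE ltnNge; apply/negP => Hij.
  by move: iA; rewrite (Hd _ _ Hij jA).
by move/subset_leq_card; rewrite card_ltset // ltnW.
Qed.

Definition key m (c : config m.+1) : {set V} :=
  [set x | [exists i : 'I_N, (c.2 i == Some ord0) && (c.1 i == x)]].

Lemma struct0 (W : {set V}) m (s : {ffun 'I_N -> V}) (g : {ffun 'I_N -> option 'I_m.+1}) :
  valid W (s, g) -> forall n, (getc g n == Some ord0) = (n < #|key (s, g)|).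
Proof.
move=> Hv; have Hmono := monotone Hv; case/validP: Hv => HJ HC HI HIm HS.
pose Zs := [set i : 'I_N | g i == Some ord0].
have Zk : forall i, i \in Zs -> i < #|W|.
  move=> i; rewrite inE ltnNge; apply: contraTN => Hi.
  by case: (HJ i Hi) => _; rewrite getT_val => ->.
have Hd : forall i j : 'I_N, i <= j -> j \in Zs -> i \in Zs.
  move=> i j Hij Hj; have Hjk := Zk _ Hj.
  have Hik : i < #|W| by apply: leq_ltn_trans Hjk.
  move: (HC i Hik) Hj (Hmono i j Hij Hjk); rewrite !inE !getT_val => + /eqP ->.
  case: (g i) => //= c _; rewrite leqn0 => /eqP c0.
  by apply/eqP; congr Some; apply: val_inj.
have keyZ : key (s, g) = [set s i | i in Zs].
  apply/setP => x; rewrite inE; apply/existsP/imsetP.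
    by case=> i /andP [Hi /eqP <-]; exists i; rewrite ?inE.
  by case=> i; rewrite inE => Hi ->; exists i; rewrite Hi eqxx.
have cardZ : #|key (s, g)| = #|Zs|.
  rewrite keyZ card_in_imset // => i j Hi Hj Hij; apply: val_inj.
  by apply: HI; rewrite ?Zk ?getT_val.
move=> n; rewrite cardZ.
case: (ltnP n N) => HnN.
  by rewrite (getT_lt _ _ HnN) -(downset Hd (Ordinal HnN)) inE.
rewrite getT_ge //; apply/esym/negbTE; rewrite -leqNgt.
by rewrite (leq_trans (max_card _)) // card_ord.
Qed.

Definition merge m k1 (c1 : config 1) (c2 : config m) : config m.+1 :=
 (mkT (fun n => if n < k1 then get c1.1 n else get c2.1 (n - k1)),
  mkT (fun n => if n < k1 then Some ord0 else omap (lift ord0) (getc c2.2 (n - k1)))).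

Definition split m k1 (c : config m.+1) : config 1 * config m :=
 ((mkT (fun n => if n < k1 then get c.1 n else x0), mkT (fun n => if n < k1 then Some ord0 else None)),
  (mkT (fun n => get c.1 (n + k1)), mkT (fun n => obind (unlift ord0) (getc c.2 (n + k1))))).

Lemma cardWS (W S : {set V}) : S \subset W -> #|W| = #|S| + #|W :\: S|.
Proof. by move=> sSW; rewrite cardsD (setIidPr sSW) subnKC // subset_leq_card. Qed.

Lemma split_merge m (W S : {set V}) (c1 : config 1) (c2 : config m) :
  S \subset W -> valid S c1 -> valid (W :\: S) c2 -> split #|S| (merge #|S| c1 c2) = (c1, c2).
Proof.
move=> sSW; case: c1 c2 => [s1 g1] [s2 g2].
case/validP => HJ1 HC1 _ _ _; case/validP => HJ2 _ _ _ _.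
have HW := cardWS sSW; have kN := kN W.
congr pair; congr pair.
- apply: (@ffun_getT V x0) => n Hn; rewrite !getT_mk Hn /=.
  case: ltnP => Hk //; by case: (HJ1 n Hk).
- apply: (@ffun_getT _ None) => n Hn; rewrite !getT_mk Hn /=.
  case: ltnP => Hk; last by case: (HJ1 n Hk).
  by move: (HC1 n Hk); case: (getc g1 n) => // c _; rewrite [c]ord1.
- apply: (@ffun_getT V x0) => n Hn; rewrite !getT_mk Hn /=.
  case: ltnP => HnN.
    by rewrite ifN -?leqNgt ?leq_addl // addnK.
  have H2 : #|W :\: S| <= n by rewrite -(leq_add2l #|S|) -HW addnC (leq_trans kN HnN).
  by case: (HJ2 n H2) => ->.
- apply: (@ffun_getT _ None) => n Hn; rewrite !getT_mk Hn /=.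
  case: ltnP => HnN.
    rewrite ifN -?leqNgt ?leq_addl // addnK.
    by case: (getc g2 n) => //= c; rewrite liftK.
  have H2 : #|W :\: S| <= n by rewrite -(leq_add2l #|S|) -HW addnC (leq_trans kN HnN).
  by case: (HJ2 n H2) => _ ->.
Qed.

Lemma keyP m (s : {ffun 'I_N -> V}) (g : {ffun 'I_N -> option 'I_m.+1}) x :
  x \in key (s, g) <-> exists n, getc g n = Some ord0 /\ get s n = x.
Proof.
rewrite inE; split.
  by case/existsP => i /andP [/eqP Hg /eqP Hs]; exists i; rewrite !getT_val.
case=> n []; case: (ltnP n N) => HnN; last by rewrite getT_ge.
rewrite !(getT_lt _ _ HnN) => Hg Hs; apply/existsP; exists (Ordinal HnN).
by rewrite Hg Hs !eqxx.
Qed.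

Lemma colv1 (o : option 'I_1) : colv o = 0.
Proof. by case: o => [[[]]|]. Qed.

Lemma colv_lift m (o : option 'I_m) :
  colv (omap (lift ord0) o) = if o is Some c then (val c).+1 else 0.
Proof. by case: o. Qed.

Lemma merge_valid m (W S : {set V}) (c1 : config 1) (c2 : config m) :
  S \subset W -> valid S c1 -> valid (W :\: S) c2 ->
  valid W (merge #|S| c1 c2) /\ key (merge #|S| c1 c2) = S.
Proof.
move=> sSW; case: c1 c2 => [s1 g1] [s2 g2].
move=> /validP [J1 C1 I1 Im1 S1] /validP [J2 C2 I2 Im2 S2].
have HW := cardWS sSW; have kN := kN W.
have WS : forall x, x \in W = (x \in S) || (x \in W :\: S).
  move=> x; rewrite in_setD; case: (boolP (x \in S)) => //= xS.
  by rewrite (subsetP sSW).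
split; last first.
  apply/setP => x; rewrite /merge /=.
  apply/idP/idP.
    move/keyP => [n []]; rewrite !getT_mk; case: ltnP => // HnN.
    case: ltnP => Hk; first by move=> _ <-; apply/Im1; exists n.
    by case: (getc g2 (n - #|S|)) => //= c [] /eqP; rewrite eq_sym (negbTE (neq_lift _ _)).
  move/Im1 => [n Hn <-]; apply/keyP; exists n; rewrite !getT_mk Hn.
  have -> : n < N by apply: leq_trans Hn (leq_trans (subset_leq_card sSW) kN).
  done.
apply/validP; move: J1 C1 I1 Im1 S1 J2 C2 I2 Im2 S2 HW kN.
rewrite /merge /=.
move: (#|S|) (#|W :\: S|) (#|W|) => k1 k2 k J1 C1 I1 Im1 S1 J2 C2 I2 Im2 S2 HW kN.
have gM : forall n, n < k -> get (mkT (fun n => if n < k1 then get s1 n else get s2 (n - k1))) n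
                     = if n < k1 then get s1 n else get s2 (n - k1).
  by move=> n Hn; rewrite getT_mk ifT // (leq_trans Hn kN).
have cM : forall n, n < k ->
   getc (mkT (fun n => if n < k1 then Some ord0 else omap (lift ord0) (getc g2 (n - k1)))) n
   = if n < k1 then Some ord0 else omap (lift ord0) (getc g2 (n - k1)).
  by move=> n Hn; rewrite getT_mk ifT // (leq_trans Hn kN).
split.
- move=> n Hn; rewrite !getT_mk; case: ltnP => // HnN.
  have Hk1 : (n < k1) = false by apply/negbTE; rewrite -leqNgt; lia.
  rewrite Hk1.
  have H2 : k2 <= n - k1 by lia.
  by case: (J2 _ H2) => A B; rewrite A B.
- move=> n Hn; rewrite cM //; case: ltnP => // Hk.
  have H2 : n - k1 < k2 by lia.
  by move: (C2 _ H2); case: (getc g2 (n - k1)).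
- move=> a b Ha Hb; rewrite !gM //.
  case: (ltnP a k1) => Hak; case: (ltnP b k1) => Hbk.
  + exact: I1.
  + move=> Heq; have : get s1 a \in S by apply/Im1; exists a.
    have : get s2 (b - k1) \in W :\: S by apply/Im2; exists (b - k1) => //; lia.
    by rewrite Heq in_setD => /andP [/negbTE ->].
  + move=> Heq; have : get s1 b \in S by apply/Im1; exists b.
    have : get s2 (a - k1) \in W :\: S by apply/Im2; exists (a - k1) => //; lia.
    by rewrite Heq in_setD => /andP [/negbTE ->].
  + move=> /I2 H; have : a - k1 = b - k1 by apply: H; lia.
    lia.
- move=> x; rewrite WS; split.
    case/orP => [/Im1 [n Hn <-]|/Im2 [n Hn <-]].
      by exists n; [lia | rewrite gM ?Hn //; lia].
    exists (n + k1); first lia.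
    by rewrite gM; [rewrite ifN ?addnK //; lia | lia].
  case=> n Hn <-; rewrite gM //; case: ltnP => Hk.
    by apply/orP; left; apply/Im1; exists n.
  by apply/orP; right; apply/Im2; exists (n - k1) => //; lia.
- move=> n Hn; rewrite !gM ?cM; try lia.
  case: (ltnP n.+1 k1) => H1.
    have Hn1 : n < k1 by lia.
    rewrite ?Hn1 ?H1.
    by move: (S1 n H1); rewrite /step !colv1.
  have H1' : (n.+1 < k1) = false by apply/negbTE; rewrite -leqNgt.
  rewrite ?H1'.
  case: (ltnP n k1) => H0.
    rewrite ?H0.
    have -> : n.+1 - k1 = 0 by lia.
    have H2 : 0 < k2 by lia.
    move: (C2 0 H2); rewrite /step colv_lift; case: (getc g2 0) => //= c _.
    by case: (E _ _).
  have H0' : (n < k1) = false by apply/negbTE; rewrite -leqNgt.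
  rewrite ?H0'.
  have -> : n.+1 - k1 = (n - k1).+1 by lia.
  have H2 : (n - k1).+1 < k2 by lia.
  have H3 : (n - k1) < k2 by lia.
  move: (S1 n) (S2 _ H2) (C2 _ H2) (C2 _ H3); rewrite /step !colv_lift.
  by case: (getc g2 (n - k1)) => // a; case: (getc g2 (n - k1).+1).
Qed.

Lemma get_split1 m k1 (c : config m.+1) n : k1 <= N ->
  get (split k1 c).1.1 n = if n < k1 then get c.1 n else x0.
Proof.
move=> Hk; rewrite /= getT_mk; case: ltnP => // HnN.
by rewrite ifN // -leqNgt (leq_trans Hk HnN).
Qed.

Lemma getc_split1 m k1 (c : config m.+1) n : k1 <= N ->
  getc (split k1 c).1.2 n = if n < k1 then Some ord0 else None.
Proof.
move=> Hk; rewrite /= getT_mk; case: ltnP => // HnN.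
by rewrite ifN // -leqNgt (leq_trans Hk HnN).
Qed.

Lemma get_split2 m k1 (c : config m.+1) n :
  get (split k1 c).2.1 n = get c.1 (n + k1).
Proof.
rewrite /= getT_mk; case: ltnP => // HnN.
by rewrite getT_ge // (leq_trans HnN) // leq_addr.
Qed.

Lemma getc_split2 m k1 (c : config m.+1) n :
  getc (split k1 c).2.2 n = obind (unlift ord0) (getc c.2 (n + k1)).
Proof.
rewrite /= getT_mk; case: ltnP => // HnN.
by rewrite getT_ge // (leq_trans HnN) // leq_addr.
Qed.

Lemma merge_split m (W : {set V}) (c : config m.+1) :
  valid W c -> merge #|key c| (split #|key c| c).1 (split #|key c| c).2 = c.
Proof.
case: c => s g Hv; have Hst := struct0 Hv.
have kS : #|key (s, g)| <= N by rewrite (leq_trans (max_card _)) // card_ord.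
move: Hst kS; move: (#|key (s, g)|) => k1 Hst kS.
congr pair.
  apply: (@ffun_getT V x0) => n HnN; rewrite getT_mk HnN.
  case: ltnP => Hk.
    by rewrite get_split1 // Hk.
  by rewrite get_split2 subnK.
apply: (@ffun_getT _ None) => n HnN; rewrite getT_mk HnN.
case: ltnP => Hk.
  by apply/esym/eqP; rewrite Hst.
rewrite getc_split2 subnK //.
have := Hst n; rewrite ltnNge Hk /=.
case: (getc g n) => //= c Hc.
case: unliftP => [d ->|Hc0] //.
by rewrite Hc0 eqxx in Hc.
Qed.

Lemma split_valid m (W S : {set V}) (c : config m.+1) :
  S \subset W -> valid W c -> key c = S ->
  valid S (split #|S| c).1 /\ valid (W :\: S) (split #|S| c).2.
Proof.
case: c => s g sSW Hv HS; have Hst := struct0 Hv.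
have kS : #|S| <= N by rewrite (leq_trans (max_card _)) // card_ord.
have HW := cardWS sSW.
have Hkey : forall x, x \in S <-> exists2 n, n < #|S| & get s n = x.
  move=> x; rewrite -{1}HS; split.
    by case/keyP => n [/eqP Hg <-]; exists n => //; rewrite -HS -Hst Hg.
  by case=> n Hn <-; apply/keyP; exists n; split => //; apply/eqP; rewrite Hst HS.
rewrite HS in Hst.
case/validP: Hv => J C I Im St.
split; apply/validP; move: J C I Im St Hkey Hst HW;
  move: (#|S|) (#|W :\: S|) (#|W|) kS => k1 k2 k kS J C I Im St Hkey Hst HW.
  rewrite /=.
  have g1 : forall n, get (mkT (fun n => if n < k1 then get s n else x0)) n
                      = if n < k1 then get s n else x0.
    move=> n; rewrite getT_mk; case: ltnP => // HnN.
    by rewrite ifN // -leqNgt (leq_trans kS HnN).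
  have c1 : forall n, getc (mkT (fun n => if n < k1 then Some (ord0 : 'I_1) else None)) n
                      = if n < k1 then Some ord0 else None.
    move=> n; rewrite getT_mk; case: ltnP => // HnN.
    by rewrite ifN // -leqNgt (leq_trans kS HnN).
  split.
  - by move=> n Hn; rewrite g1 c1 ltnNge Hn.
  - by move=> n Hn; rewrite c1 Hn.
  - move=> a b Ha Hb; rewrite !g1 Ha Hb; apply: I; lia.
  - move=> x; rewrite Hkey; split; case=> n Hn <-; exists n => //; by rewrite g1 Hn.
  - move=> n Hn; have Hn' : n < k1 by apply: ltnW.
    rewrite !g1 !c1 Hn Hn'.
    have Hg0 : getc g n = Some ord0 by apply/eqP; rewrite Hst.
    have Hg1 : getc g n.+1 = Some ord0 by apply/eqP; rewrite Hst.
    have Hk : n.+1 < k by lia.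
    by move: (St n Hk); rewrite /step Hg0 Hg1 /=; case: (E _ _).
rewrite /=.
have g2 : forall n, get (mkT (fun n => get s (n + k1))) n = get s (n + k1).
  move=> n; rewrite getT_mk; case: ltnP => // HnN.
  by rewrite getT_ge // (leq_trans HnN) // leq_addr.
have c2 : forall n, getc (mkT (fun n => obind (unlift ord0) (getc g (n + k1)))) n
                    = obind (unlift ord0) (getc g (n + k1)).
  move=> n; rewrite getT_mk; case: ltnP => // HnN.
  by rewrite getT_ge // (leq_trans HnN) // leq_addr.
split.
- move=> n Hn; rewrite g2 c2.
  have Hk : k <= n + k1 by lia.
  by case: (J _ Hk) => A B; rewrite A B.
- move=> n Hn; rewrite c2.
  have Hk : n + k1 < k by lia.
  move: (C _ Hk) (Hst (n + k1)); case: (getc g (n + k1)) => //= c _.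
  case: unliftP => [d _|->] //.
  by rewrite eqxx ltnNge leq_addl.
- move=> a b Ha Hb; rewrite !g2 => /I H.
  have : a + k1 = b + k1 by apply: H; lia.
  lia.
- move=> x; rewrite in_setD; split.
    case/andP => xnS /Im [n Hn Hx]; subst x.
    case: (ltnP n k1) => Hk.
      have : get s n \in S by apply/Hkey; exists n.
      by rewrite (negbTE xnS).
    by exists (n - k1); [lia | rewrite g2 subnK].
  case=> n Hn <-; rewrite g2; apply/andP; split.
    apply/negP => /Hkey [n' Hn' Heq].
    have : n' = n + k1 by apply: I => //; lia.
    lia.
  by apply/Im; exists (n + k1) => //; lia.
- move=> n Hn; rewrite !g2 !c2.
  have Hk : (n + k1).+1 < k by lia.
  have Hk0 : n + k1 < k by lia.
  move: (St _ Hk) (C _ Hk0) (C _ Hk) (Hst (n + k1)) (Hst (n + k1).+1).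
  rewrite -addSn /step.
  case: (getc g (n + k1)) => // a; case: (getc g (n.+1 + k1)) => // b HSt _ _.
  have F1 : (n.+1 + k1 <= k1) = false by apply/negbTE; rewrite -ltnNge; lia.
  have F2 : (n.+1 + k1 < k1) = false by apply/negbTE; rewrite -leqNgt; lia.
  rewrite F1 F2; move: HSt.
  case: (unliftP ord0 a) => [a' ->|->]; last by move=> _; rewrite eqxx.
  case: (unliftP ord0 b) => [b' ->|->]; last by move=> _ _; rewrite eqxx.
  rewrite /= !liftK /= => + _ _.
  by rewrite /bump !add1n !ltnS.
Qed.

Lemma key_sub (W : {set V}) m (c : config m.+1) : valid W c -> key c \subset W.
Proof.
case: c => s g /validP [J _ _ Im _]; apply/subsetP => x /keyP [n [Hg Hs]].
apply/Im; exists n => //; rewrite ltnNge; apply/negP => Hn.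
by case: (J n Hn) => _; rewrite Hg.
Qed.

Lemma UFC (W : {set V}) m :
  U W m.+1 = \sum_(S : {set V} | S \subset W) U S 1 * U (W :\: S) m.
Proof.
rewrite /U -sum1dep_card.
rewrite (partition_big (@key m) (fun S => S \subset W)) /=; last first.
  by move=> c; apply: key_sub.
apply: eq_bigr => S sSW.
rewrite (reindex_onto (fun p : config 1 * config m => merge #|S| p.1 p.2) (split #|S|)); last first.
  by move=> c /andP [Hv /eqP HS]; rewrite -HS (merge_split Hv).
rewrite -!sum1dep_card big_distrl /=.
under [RHS]eq_bigr do rewrite mul1n.
rewrite pair_big /=.
apply: eq_bigl => -[c1 c2] /=.
apply/idP/idP.
  move=> /andP [/andP [Hv /eqP HS] /eqP Hsm].
  have := split_valid sSW Hv HS; rewrite Hsm /= => -[-> ->] //.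
move=> /andP [H1 H2].
have [Hv HS] := merge_valid sSW H1 H2.
by rewrite Hv HS eqxx (split_merge sSW H1 H2) eqxx.
Qed.

Definition liftg m (g' : {ffun 'I_N -> 'I_m}) : {ffun 'I_N -> option 'I_m} :=
  [ffun i => Some (g' i)].

Lemma T1 m : u_X E m = U setT m.
Proof.
have N0 : 0 < N by apply/card_gt0P; exists x0.
have i0 : 'I_N := Ordinal N0.
rewrite /U -sum1dep_card (partition_big (fun c : config m => c.1) (fun s => injectiveb s)) /=; last first.
  move=> [s g] /and5P [_ _ HI _ _]; apply/injectiveP => i j Hij.
  move: HI; rewrite cardsT => /forallP /(_ i) /forallP /(_ j).
  by rewrite !ltn_ord Hij eqxx /= => /eqP.
rewrite /u_X; apply: eq_bigr => s /injectiveP Hs.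
rewrite (reindex_onto (fun g => (s, g)) snd) /=; last by move=> [s' g] /andP [_ /eqP /= ->].
case: m => [|m].
  rewrite big_pred0; last first.
    move=> g; apply/negbTE; apply/negP => /andP [/andP [/and5P [_ HC _ _ _] _] _].
    move: HC; rewrite cardsT => /forallP /(_ i0); rewrite ltn_ord /=.
    by case: (g i0) => // -[].
  apply/eqP; rewrite cards_eq0; apply/eqP/setP => g'; rewrite !inE.
  by case: (g' i0).
rewrite -sum1dep_card.
rewrite (reindex_onto (@liftg m.+1) (fun g => [ffun i => odflt ord0 (g i)])); last first.
  move=> g /andP [/andP [/and5P [_ HC _ _ _] _] _]; apply/ffunP => i; rewrite !ffunE.
  move: HC; rewrite cardsT => /forallP /(_ i); rewrite ltn_ord /=.
  by case: (g i).
apply: eq_bigl => g'.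
have -> : [ffun i => odflt ord0 (liftg g' i)] = g' by apply/ffunP => i; rewrite !ffunE.
rewrite !eqxx !andbT.
apply/idP/idP.
  move=> HF; rewrite /valid cardsT; apply/and5P; split.
  - by apply/forallP => i; rewrite leqNgt ltn_ord.
  - by apply/forallP => i; rewrite /= ffunE implybT.
  - apply/forallP => i; apply/forallP => j; apply/implyP => /and3P [_ _ /eqP Hij].
    by rewrite (Hs _ _ Hij).
  - apply/forallP => x; apply/eqP; rewrite inE; apply/esym/existsP.
    have : x \in codom s by apply: inj_card_onto; rewrite ?card_ord.
    by case/codomP => i ->; exists i; rewrite ltn_ord eqxx.
  - apply/forallP => i; apply/forallP => j; apply/implyP => /andP [Hij _].
    move: HF => /forallP /(_ i) /forallP /(_ j); rewrite Hij /= /step !ffunE /=.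
    by rewrite /XDes.
move/and5P => [_ _ _ _ HS]; apply/forallP => i; apply/forallP => j; apply/implyP => Hij.
move: HS => /forallP /(_ i) /forallP /(_ j); rewrite Hij cardsT ltn_ord /= /step !ffunE /=.
by rewrite /XDes.
Qed.
End UWorld.
Section AWorld.
Variable V : finType.
Variable h : {set V} -> nat.

Definition good (W : {set V}) m (f : {ffun V -> option 'I_m}) :=
  [forall x, (x \in W) == (f x != None)].

Definition wt m (f : {ffun V -> option 'I_m}) :=
  \prod_(c : 'I_m) h [set x | f x == Some c].

Definition A (W : {set V}) m := \sum_(f : {ffun V -> option 'I_m} | good W f) wt f.

Lemma goodP (W : {set V}) m (f : {ffun V -> option 'I_m}) :
  reflect (forall x, (x \in W) = (f x != None)) (good W f).
Proof. by apply: (iffP forallP) => H x; [apply/eqP; apply: H | rewrite H]. Qed.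

Lemma A0 (W : {set V}) : A W 0 = (W == set0).
Proof.
rewrite /A.
case: eqP => [->|/eqP].
  rewrite (bigD1 [ffun => None]) /=; last by apply/goodP => x; rewrite ffunE inE.
  rewrite big1 ?addn0 /wt ?big_ord0 // => f /andP [/goodP Hf Hne].
  case/eqP: Hne; apply/ffunP => x; rewrite ffunE.
  by move: (Hf x); rewrite inE; case: (f x).
case/set0Pn => v Hv.
rewrite big1 // => f /goodP Hf; move: (Hf v); rewrite Hv.
by case: (f v) => // [[]].
Qed.

Definition pre0 m (f : {ffun V -> option 'I_m.+1}) := [set x | f x == Some ord0].

Definition ext m (S : {set V}) (f : {ffun V -> option 'I_m}) : {ffun V -> option 'I_m.+1} :=
  [ffun x => if x \in S then Some ord0 else omap (lift ord0) (f x)].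
Definition shrink m (f : {ffun V -> option 'I_m.+1}) : {ffun V -> option 'I_m} :=
  [ffun x => obind (unlift ord0) (f x)].

Lemma Ainner m (W S : {set V}) : S \subset W ->
  \sum_(f : {ffun V -> option 'I_m.+1} | good W f && (pre0 f == S)) wt f =
  h S * A (W :\: S) m.
Proof.
move=> sSW.
rewrite (reindex_onto (@ext m S) (@shrink m)); last first.
  move=> f /andP [/goodP Hf /eqP HS]; apply/ffunP => x; rewrite !ffunE.
  case: ifP => xS.
    by move: xS; rewrite -HS inE => /eqP.
  move: xS; rewrite -HS inE.
  case: (f x) => [c|] //= Hc.
  case: unliftP => [j ->|Hc0] //.
  by rewrite Hc0 eqxx in Hc.
rewrite /A big_distrr /=.
apply: eq_big => f'.
  apply/idP/idP.
    move=> /andP [/andP [/goodP Hg _] /eqP Hs].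
    apply/goodP => x.
    move: (Hg x); rewrite !ffunE in_setD.
    case: ifP => xS /=.
      move=> _; move/ffunP: Hs => /(_ x); rewrite !ffunE xS /=.
      by case: unliftP => // _ <-.
    by case: (f' x).
  move=> /goodP Hg.
  apply/andP; split; [apply/andP; split|].
  - apply/goodP => x; rewrite ffunE; case: ifP => xS.
      by rewrite (subsetP sSW).
    by move: (Hg x); rewrite in_setD xS /=; case: (f' x).
  - apply/eqP/setP => x; rewrite inE ffunE; case: ifP => xS //.
    by case: (f' x).
  - apply/eqP/ffunP => x; rewrite !ffunE; case: ifP => xS.
      by move: (Hg x); rewrite in_setD xS /= unlift_none; case: (f' x).
    case: (f' x) => [c|] //=; by rewrite liftK.
move=> /andP [_ /eqP Hs].
have Hg : forall x, x \in S -> f' x = None.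
  by move=> x xS; move/ffunP: Hs => /(_ x); rewrite !ffunE xS /= unlift_none.
rewrite /wt big_ord_recl; congr (_ * _).
  congr h; apply/setP => x; rewrite inE ffunE; case: ifP => xS //.
  by case: (f' x).
apply: eq_bigr => c _; congr h; apply/setP => x; rewrite !in_set ffunE.
case: ifP => xS.
  by rewrite Hg //=.
case: (f' x) => [d|] //=.
Qed.

Lemma AFC (W : {set V}) m : A W m.+1 = \sum_(S : {set V} | S \subset W) h S * A (W :\: S) m.
Proof.
rewrite /A (partition_big (@pre0 m) (fun S => S \subset W)) /=; last first.
  move=> f /goodP Hf; apply/subsetP => x; rewrite inE Hf => /eqP ->; done.
apply: eq_bigr => S sSW; exact: Ainner.
Qed.

Definition tp m (c : 'I_m.+1) (f : {ffun V -> option 'I_m.+1}) : {ffun V -> option 'I_m.+1} :=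
  [ffun x => omap (tperm ord0 c) (f x)].

Lemma tp_inj m c : injective (@tp m c).
Proof.
move=> f g /ffunP H; apply/ffunP => x; move: (H x); rewrite !ffunE.
by case: (f x); case: (g x) => //= a b [] /perm_inj ->.
Qed.

Lemma AV (W : {set V}) m v : v \in W ->
  A W m.+1 = m.+1 * \sum_(S : {set V} | (v \in S) && (S \subset W)) h S * A (W :\: S) m.
Proof.
move=> vW.
rewrite /A (partition_big (fun f : {ffun V -> option 'I_m.+1} => odflt ord0 (f v)) predT) //=.
have H0 : forall c : 'I_m.+1,
  \sum_(f : {ffun V -> option 'I_m.+1} | good W f && (odflt ord0 (f v) == c)) wt f =
  \sum_(f : {ffun V -> option 'I_m.+1} | good W f && (f v == Some ord0)) wt f.
  move=> c.
  symmetry; rewrite (reindex_inj (@tp_inj m c)).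
  apply: eq_big => f.
    have Hg : good W (tp c f) = good W f.
      apply/goodP/goodP => Hf x; rewrite Hf ffunE; by case: (f x).
    rewrite Hg; case Hf: (good W f) => //=.
    move/goodP: Hf => /(_ v); rewrite vW ffunE.
    case: (f v) => //= a _.
    apply/eqP/eqP => [[] H|<-].
      by rewrite -(tpermK ord0 c a) H tpermL.
    by rewrite tpermR.
  move=> _; rewrite /wt (reindex_inj (@perm_inj _ (tperm ord0 c))).
  apply: eq_bigr => d _; congr h; apply/setP => x; rewrite !inE ffunE.
  case: (f x) => //= a.
  by apply/eqP/eqP => [[] /perm_inj ->|[->]].
rewrite (eq_bigr _ (fun c _ => H0 c)) sum_nat_const card_ord.
congr (_ * _).
rewrite (partition_big (@pre0 m) (fun S => (v \in S) && (S \subset W))) /=; last first.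
  move=> f /andP [/goodP Hf /eqP Hv]; rewrite inE Hv eqxx /=.
  apply/subsetP => x; rewrite inE Hf => /eqP ->; done.
apply: eq_bigr => S /andP [vS sSW].
rewrite -Ainner //; apply: eq_bigl => f.
rewrite -andbA; congr (_ && _).
apply/andP/idP => [[_ ->]//|/eqP HS]; split; [by move: vS; rewrite -HS inE | by rewrite HS].
Qed.

Local Open Scope ring_scope.

Lemma Aempty m : h set0 = 1%N -> A set0 m = 1%N.
Proof.
move=> h0; elim: m => [|m IH]; first by rewrite A0 eqxx.
rewrite AFC (big_pred1 set0); last by move=> S; rewrite subset0.
by rewrite setD0 IH h0.
Qed.

Lemma Apoly (W : {set V}) : h set0 = 1%N ->
  exists p : {poly int}, forall m : nat, ((A W m)%:Z = p.[m%:Z])%R.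
Proof.
move=> h0.
move: {2}#|W| (leqnn #|W|) => n; elim: n W => [|n IH] W HW.
  have -> : W = set0 by apply/eqP; rewrite -cards_eq0 -leqn0.
  by exists 1 => m; rewrite hornerC Aempty.
case: (set_0Vmem W) => [->|[v vW]].
  by exists 1 => m; rewrite hornerC Aempty.
have : forall S : {set V}, exists p : {poly int},
   (v \in S) && (S \subset W) -> forall m : nat, ((A (W :\: S) m)%:Z = p.[m%:Z])%R.
  move=> S; case: (boolP ((v \in S) && (S \subset W))) => [/andP [vS sSW]|_];
    last by exists 0.
  have [p Hp] : exists p : {poly int}, forall m : nat, ((A (W :\: S) m)%:Z = p.[m%:Z])%R.
    apply: IH; rewrite -ltnS; apply: leq_trans HW.
    rewrite cardsD (setIidPr sSW) ltn_subrL; apply/andP; split.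
      by apply/card_gt0P; exists v.
    by rewrite (leq_trans _ (subset_leq_card sSW)) //; apply/card_gt0P; exists v.
  by exists p.
case/fin_all_exists => P HP.
pose Q := \sum_(S : {set V} | (v \in S) && (S \subset W)) (h S)%:Z *: P S.
exists ('X * (Q \Po ('X - 1))) => m.
case: m => [|m].
  rewrite A0 !hornerE; have -> // : (W == set0) = false by apply/eqP => E0; rewrite E0 inE in vW.
rewrite (AV _ vW) hornerE horner_comp hornerE /= PoszM.
have -> : (('X - 1).[m.+1%:Z] = m%:Z :> int)%R by rewrite hornerD hornerN hornerX hornerC -addn1 PoszD addrK.
congr (_ * _)%R.
rewrite /Q horner_sum (big_morph Posz PoszD (erefl (0:int))).
apply: eq_bigr => S HS; rewrite PoszM hornerZ (HP S HS) //.
Qed.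
End AWorld.

Unset Implicit Arguments.
Local Open Scope ring_scope.

Theorem mainTheorem14 (V : finType) (E : rel V) (HE : irreflexive E) :
  exists p : {poly int}, forall m : nat, ((u_X E m)%:Z = p.[m%:Z])%R.
Proof.
case: (pickP (fun _ : V => true)) => [x0 _ | Hemp].
  pose h := fun S : {set V} => U E x0 S 1.
  have UA : forall m W, U E x0 W m = A h W m.
    elim=> [|m IH] W.
      rewrite A0; case: eqP => [->|/eqP H]; [exact: Uempty | exact: U0].
    by rewrite UFC AFC; apply: eq_bigr => S _; rewrite IH.
  have [p Hp] := @Apoly V h setT (Uempty E x0 1).
  by exists p => m; rewrite (T1 E x0) UA Hp.
have V0 : #|V| = 0%N by apply: eq_card0 => x; move: (Hemp x).
exists 1 => m; rewrite hornerC.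
rewrite /u_X (eq_bigl predT); last first.
  by move=> s; apply/injectiveP => i; exfalso; move: (ltn_ord i); move: (val i) => k; rewrite V0.
rewrite (eq_bigr (fun _ => 1%N)); last first.
  move=> s _; rewrite (_ : [set g | _] = setT) ?cardsT ?card_ffun ?card_ord ?V0 //.
  by apply/setP => g; rewrite !inE; apply/forallP => i; exfalso; move: (ltn_ord i); move: (val i) => k; rewrite V0.
by rewrite sum1_card card_ffun card_ord V0.
Qed.
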